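(* Let $\theta^*$ be an optimal solution of OPT and let $m^*(t)$ be the number of jobs not yet completed at time $t$ under $\theta^*$. For any two times $t_1,t_2>0$, if $m^*(t_1)=m^*(t_2)$ then $\theta_i^*(t_1)=\theta_i^*(t_2)$ for all $i=1,\dots,M$.
   Context: Setting (problem OPT). There are $M$ jobs, all available at time $0$, with sizes $x_1\ge x_2\ge\cdots\ge x_M>0$ and weights $0<w_1\le w_2\le\cdots\le w_M$. A total resource $B>0$ is shared. The speedup function $s:[0,B]\to[0,\infty)$ satisfies: $s(0)=0$; $s$ is strictly increasing, strictly concave, differentiable, and $s'$ is continuous on $[0,B]$. A schedule consists of functions $\theta_i:(0,\infty)\to[0,B]$, $i=1,\dots,M$, each right-continuous in $t$, with $\sum_{i=1}^M\theta_i(t)\le B$ for all $t>0$. The service received by job $i$ on $[t_1,t_2]$ is $Q_i(t_1,t_2)=\int_{t_1}^{t_2}s(\theta_i(t))\,dt$. The completion time $T_i$ of job $i$ satisfies $Q_i(0,T_i)=x_i$, and $\theta_i(t)=0$ for $t>T_i$. OPT is the problem of choosing a schedule minimizing $J=\sum_{i=1}^M w_iT_i$. An optimal solution is a feasible schedule attaining the minimum. *)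

(* Defs.v *)
From Stdlib Require Import Reals List.
From Coquelicot Require Import Coquelicot.
Open Scope R_scope.

Fixpoint rsum (f : nat -> R) (n : nat) : R :=
  match n with O => 0 | S k => rsum f k + f k end.

Fixpoint count_lt (P : nat -> Prop) (Pdec : forall i, {P i} + {~ P i}) (n : nat) : nat :=
  match n with
  | O => O
  | S k => (count_lt P Pdec k + if Pdec k then 1 else 0)%nat
  end.

Definition in_0B (B y : R) : Prop := 0 <= y <= B.

Definition speedup_ok (B : R) (s : R -> R) : Prop :=
  s 0 = 0 /\
  (forall a b, in_0B B a -> in_0B B b -> a < b -> s a < s b) /\
  (forall a b l, in_0B B a -> in_0B B b -> a <> b -> 0 < l < 1 ->
      l * s a + (1 - l) * s b < s (l * a + (1 - l) * b)) /\
  (* differentiable on [0,B] (one-sided at endpoints) with continuous derivative *)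
  (exists ds : R -> R,
     (forall a, in_0B B a -> forall eps, 0 < eps -> exists delta, 0 < delta /\
        forall y, in_0B B y -> Rabs (y - a) < delta ->
          Rabs (s y - s a - ds a * (y - a)) <= eps * Rabs (y - a)) /\
     (forall a, in_0B B a -> forall eps, 0 < eps -> exists delta, 0 < delta /\
        forall y, in_0B B y -> Rabs (y - a) < delta -> Rabs (ds y - ds a) < eps)).

Definition right_cont_at (f : R -> R) (t : R) : Prop :=
  forall eps, 0 < eps -> exists delta, 0 < delta /\
    forall u, t <= u < t + delta -> Rabs (f u - f t) < eps.

Definition feasible (M : nat) (x : nat -> R) (B : R) (s : R -> R)
    (theta : nat -> R -> R) (T : nat -> R) : Prop :=
  (forall i, (i < M)%nat -> forall t, 0 < t -> 0 <= theta i t <= B) /\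
  (forall i, (i < M)%nat -> forall t, 0 < t -> right_cont_at (theta i) t) /\
  (forall t, 0 < t -> rsum (fun i => theta i t) M <= B) /\
  (forall i, (i < M)%nat -> 0 < T i) /\
  (forall i, (i < M)%nat -> is_RInt (fun t => s (theta i t)) 0 (T i) (x i)) /\
  (forall i, (i < M)%nat -> forall t, T i < t -> theta i t = 0).

Definition cost (M : nat) (w : nat -> R) (T : nat -> R) : R :=
  rsum (fun i => w i * T i) M.

Definition optimal (M : nat) (x w : nat -> R) (B : R) (s : R -> R)
    (theta : nat -> R -> R) (T : nat -> R) : Prop :=
  feasible M x B s theta T /\
  forall theta' T', feasible M x B s theta' T' -> cost M w T <= cost M w T'.

Definition remaining (M : nat) (T : nat -> R) (t : R) : nat :=
  count_lt (fun i => t < T i) (fun i => Rlt_dec t (T i)) M.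

(* Main.v *)
Require Import Defs.
From Stdlib Require Import Reals Lra Lia Classical ClassicalEpsilon IndefiniteDescription.
From Coquelicot Require Import Coquelicot.
Open Scope R_scope.


Lemma rsum_ext f g n : (forall k, (k < n)%nat -> f k = g k) -> rsum f n = rsum g n.
Proof. induction n; simpl; intros; auto. rewrite IHn, (H n); auto; lia. Qed.

Lemma rsum_le f g n : (forall k, (k < n)%nat -> f k <= g k) -> rsum f n <= rsum g n.
Proof. induction n; simpl; intros; [lra|].
  assert (rsum f n <= rsum g n) by (apply IHn; intros; apply H; lia).
  specialize (H n (Nat.lt_succ_diag_r n)). lra. Qed.

Lemma rsum_plus f g n : rsum (fun k => f k + g k) n = rsum f n + rsum g n.
Proof. induction n; simpl; [lra|]. rewrite IHn; lra. Qed.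

Lemma rsum_scal c f n : rsum (fun k => c * f k) n = c * rsum f n.
Proof. induction n; simpl; [lra|]. rewrite IHn; lra. Qed.

Lemma rsum_const c n : rsum (fun _ => c) n = INR n * c.
Proof. induction n; simpl rsum; [simpl; lra|]. rewrite IHn, S_INR; lra. Qed.

Lemma rsum_delta i v n : (i < n)%nat ->
  rsum (fun k => if Nat.eq_dec k i then v else 0) n = v.
Proof.
  induction n; intros; [lia|]. simpl.
  destruct (Nat.eq_dec n i).
  - subst. assert (rsum (fun k => if Nat.eq_dec k i then v else 0) i = 0).
    { clear. assert (forall m, (m <= i)%nat -> rsum (fun k => if Nat.eq_dec k i then v else 0) m = 0).
      { induction m; simpl; intros; auto. rewrite IHm by lia. destruct (Nat.eq_dec m i); [lia|lra]. }
      apply H; lia. }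
    lra.
  - rewrite IHn by lia. lra.
Qed.

Lemma rsum_nonneg f n : (forall k, (k < n)%nat -> 0 <= f k) -> 0 <= rsum f n.
Proof. intros. replace 0 with (rsum (fun _ => 0) n). apply rsum_le; auto.
  rewrite rsum_const; lra. Qed.

Lemma rsum_one f n i : (forall k, (k < n)%nat -> 0 <= f k) -> (i < n)%nat -> f i <= rsum f n.
Proof.
  intros. rewrite <- (rsum_delta i (f i) n) by auto. apply rsum_le.
  intros. destruct (Nat.eq_dec k i); subst; [lra| apply H; auto].
Qed.

Lemma rsum_two f n i j : (forall k, (k < n)%nat -> 0 <= f k) -> (i < n)%nat -> (j < n)%nat ->
  i <> j -> f i + f j <= rsum f n.
Proof.
  intros. rewrite <- (rsum_delta i (f i) n), <- (rsum_delta j (f j) n) by auto.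
  rewrite <- rsum_plus. apply rsum_le. intros.
  destruct (Nat.eq_dec k i), (Nat.eq_dec k j); subst; try lia.
  - lra. - lra. - specialize (H k H3). lra.
Qed.

Lemma rsum_lt f g n i : (forall k, (k < n)%nat -> f k <= g k) -> (i < n)%nat -> f i < g i ->
  rsum f n < rsum g n.
Proof.
  intros. assert (rsum (fun k => g k - f k) n > 0).
  { apply Rlt_le_trans with (g i - f i); [lra|]. apply (rsum_one (fun k => g k - f k)); auto.
    intros; specialize (H k H2); lra. }
  unfold Rminus in H2. rewrite rsum_plus in H2.
  replace (rsum (fun k => - f k) n) with (-1 * rsum f n) in H2. lra.
  rewrite <- rsum_scal. apply rsum_ext; intros; lra.
Qed.

Lemma count_lt_lt P Pd Q Qd n :
  (forall k, (k < n)%nat -> P k -> Q k) -> (exists k, (k < n)%nat /\ Q k /\ ~ P k) ->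
  (count_lt P Pd n < count_lt Q Qd n)%nat.
Proof.
  assert (Hle : forall m, (forall k, (k < m)%nat -> P k -> Q k) -> (count_lt P Pd m <= count_lt Q Qd m)%nat).
  { induction m; simpl; intros; [lia|]. specialize (IHm (fun k Hk => H k ltac:(lia))).
    destruct (Pd m), (Qd m); try lia. exfalso; apply n0; apply H; auto. }
  induction n; intros H [k [Hk [HQ HP]]]; [lia|]. simpl.
  destruct (Nat.eq_dec k n).
  - subst. destruct (Pd n); [tauto|]. destruct (Qd n); [|tauto].
    specialize (Hle n (fun k Hk => H k ltac:(lia))). lia.
  - assert (count_lt P Pd n < count_lt Q Qd n)%nat.
    { apply IHn. intros; apply H; auto; lia. exists k; repeat split; auto; lia. }
    destruct (Pd n), (Qd n); try lia. exfalso; apply n1; apply H; auto.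
Qed.

Lemma s_cont B s : speedup_ok B s -> forall a, in_0B B a -> forall e, 0 < e ->
  exists d, 0 < d /\ forall y, in_0B B y -> Rabs (y - a) < d -> Rabs (s y - s a) < e.
Proof.
  intros [_ [_ [_ [ds [Hd _]]]]] a Ha e He.
  destruct (Hd a Ha 1 Rlt_0_1) as [d [Hd0 Hd1]].
  exists (Rmin d (e / (Rabs (ds a) + 2))). split.
  { apply Rmin_pos; auto. apply Rdiv_lt_0_compat; auto. pose proof (Rabs_pos (ds a)); lra. }
  intros y Hy Hya. assert (Hya1 : Rabs (y - a) < d) by (apply Rlt_le_trans with (1 := Hya); apply Rmin_l).
  assert (Hya2 : Rabs (y - a) < e / (Rabs (ds a) + 2)) by (apply Rlt_le_trans with (1 := Hya); apply Rmin_r).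
  specialize (Hd1 y Hy Hya1).
  assert (Rabs (s y - s a) <= Rabs (ds a * (y - a)) + 1 * Rabs (y - a)).
  { replace (s y - s a) with ((s y - s a - ds a * (y - a)) + ds a * (y - a)) by ring.
    eapply Rle_trans; [apply Rabs_triang|]. lra. }
  rewrite Rabs_mult in H.
  pose proof (Rabs_pos (ds a)). pose proof (Rabs_pos (y - a)).
  assert (Rabs (y - a) * (Rabs (ds a) + 2) < e).
  { apply Rmult_lt_compat_r with (r := Rabs (ds a) + 2) in Hya2; [|lra].
    unfold Rdiv in Hya2. rewrite Rmult_assoc, Rinv_l in Hya2; lra. }
  nra.
Qed.

Lemma s_mono_le B s : speedup_ok B s -> forall a b, in_0B B a -> in_0B B b -> a <= b -> s a <= s b.
Proof.
  intros [_ [Hm _]] a b Ha Hb Hab. destruct (Rle_lt_or_eq_dec _ _ Hab).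
  - left; auto. - subst; lra.
Qed.

Lemma s_range B s : 0 < B -> speedup_ok B s -> forall y, in_0B B y -> 0 <= s y <= s B.
Proof.
  intros HB hs y Hy. pose proof hs as [H0 _].
  split.
  - rewrite <- H0. apply (s_mono_le B s hs); unfold in_0B in *; lra.
  - apply (s_mono_le B s hs); unfold in_0B in *; lra.
Qed.

Lemma s_mid B s : speedup_ok B s -> forall a b, in_0B B a -> in_0B B b ->
  (s a + s b) / 2 <= s ((a + b) / 2).
Proof.
  intros hs a b Ha Hb. destruct (Req_dec a b).
  - subst. replace ((b + b) / 2) with b by field. lra.
  - destruct hs as [_ [_ [Hc _]]]. left.
    specialize (Hc a b (1/2) Ha Hb H ltac:(lra)).
    replace ((a + b) / 2) with (1 / 2 * a + (1 - 1 / 2) * b) by field. lra.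
Qed.

Lemma s_mid_strict B s : speedup_ok B s -> forall a b, in_0B B a -> in_0B B b -> a <> b ->
  (s a + s b) / 2 < s ((a + b) / 2).
Proof.
  intros hs a b Ha Hb H. destruct hs as [_ [_ [Hc _]]].
  specialize (Hc a b (1/2) Ha Hb H ltac:(lra)).
  replace ((a + b) / 2) with (1 / 2 * a + (1 - 1 / 2) * b) by field. lra.
Qed.

Lemma rc_local f g t : right_cont_at g t ->
  (exists d, 0 < d /\ forall u, t <= u < t + d -> f u = g u) -> right_cont_at f t.
Proof.
  intros Hg [d [Hd Hfg]] e He. destruct (Hg e He) as [d' [Hd' H]].
  exists (Rmin d d'). split; [apply Rmin_pos; auto|]. intros u Hu.
  pose proof (Rmin_l d d'); pose proof (Rmin_r d d').
  rewrite (Hfg u), (Hfg t) by lra. apply H; lra.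
Qed.

Lemma rc_const c t : right_cont_at (fun _ => c) t.
Proof. intros e He. exists 1. split; [lra|]. intros. rewrite Rminus_diag, Rabs_R0; auto. Qed.

Lemma rc_comp_s B s th t : speedup_ok B s -> right_cont_at th t ->
  (forall u, t <= u -> in_0B B (th u)) ->
  forall e, 0 < e -> exists d, 0 < d /\ forall u, t <= u < t + d -> Rabs (s (th u) - s (th t)) < e.
Proof.
  intros hs Hrc Hin e He.
  destruct (s_cont B s hs (th t) (Hin t (Rle_refl t)) e He) as [d1 [Hd1 H1]].
  destruct (Hrc d1 Hd1) as [d2 [Hd2 H2]]. exists d2; split; auto.
  intros u Hu. apply H1; [apply Hin; lra|]. apply H2; auto.
Qed.

Lemma fin_delta (P : nat -> R -> Prop) n :
  (forall j d d', (j < n)%nat -> 0 < d' <= d -> P j d -> P j d') ->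
  (forall j, (j < n)%nat -> exists d, 0 < d /\ P j d) ->
  exists d, 0 < d /\ forall j, (j < n)%nat -> P j d.
Proof.
  induction n; intros Hmon Hex.
  - exists 1; split; [lra|]; intros; lia.
  - destruct IHn as [d1 [Hd1 H1]].
    + intros; eapply Hmon; eauto; lia.
    + intros; apply Hex; lia.
    + destruct (Hex n ltac:(lia)) as [d2 [Hd2 H2]].
      exists (Rmin d1 d2). split; [apply Rmin_pos; auto|].
      pose proof (Rmin_l d1 d2); pose proof (Rmin_r d1 d2).
      pose proof (Rmin_pos d1 d2 Hd1 Hd2).
      intros j Hj. destruct (Nat.eq_dec j n).
      * subst. eapply Hmon; eauto.
      * eapply Hmon with (d := d1); [lia| lra |]. apply H1; lia.
Qed.

Lemma RInt_bounds (f : R -> R) u v K : u <= v -> ex_RInt f u v ->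
  (forall t, u < t < v -> 0 <= f t <= K) -> 0 <= RInt f u v <= K * (v - u).
Proof.
  intros Huv Hex Hb. split.
  - replace 0 with (RInt (fun _ => 0) u v).
    + apply RInt_le; auto. apply ex_RInt_const. intros; apply Hb; auto.
    + rewrite RInt_const. unfold scal; simpl; unfold mult; simpl. ring.
  - replace (K * (v - u)) with (RInt (fun _ => K) u v).
    + apply RInt_le; auto. apply ex_RInt_const. intros; apply Hb; auto.
    + rewrite RInt_const. unfold scal; simpl; unfold mult; simpl. ring.
Qed.

Lemma RInt_lip (f : R -> R) T K : 0 <= T -> ex_RInt f 0 T -> (forall t, 0 < t < T -> 0 <= f t <= K) ->
  forall u v, 0 <= u <= T -> 0 <= v <= T -> Rabs (RInt f 0 v - RInt f 0 u) <= K * Rabs (v - u).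
Proof.
  intros HT Hex Hb.
  assert (H : forall u v, 0 <= u <= v -> v <= T -> RInt f 0 v - RInt f 0 u = RInt f u v /\ 0 <= RInt f u v <= K * (v - u)).
  { intros u v Hu Hv.
    assert (E1 : ex_RInt f 0 v) by (apply (ex_RInt_Chasles_1 f 0 v T); auto; lra).
    assert (E2 : ex_RInt f 0 u) by (apply (ex_RInt_Chasles_1 f 0 u v); auto; lra).
    assert (E3 : ex_RInt f u v) by (apply (ex_RInt_Chasles_2 f 0 u v); auto; lra).
    split.
    - rewrite <- (RInt_Chasles f 0 u v) by auto. unfold plus; simpl. ring.
    - apply RInt_bounds; auto; try lra. intros; apply Hb; lra. }
  intros u v Hu Hv. destruct (Rle_dec u v).
  - destruct (H u v) as [E [B1 B2]]; try lra. rewrite E.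
    rewrite Rabs_pos_eq by auto. rewrite Rabs_pos_eq by lra. auto.
  - destruct (H v u) as [E [B1 B2]]; try lra.
    replace (RInt f 0 v - RInt f 0 u) with (- (RInt f 0 u - RInt f 0 v)) by ring.
    rewrite Rabs_Ropp, E. rewrite Rabs_pos_eq by auto.
    rewrite Rabs_left by lra. lra.
Qed.

Definition clamp T t := Rmax 0 (Rmin t T).

Lemma clamp_in T t : 0 <= T -> 0 <= clamp T t <= T.
Proof. intros. unfold clamp, Rmax, Rmin. destruct (Rle_dec t T), (Rle_dec 0 _); lra. Qed.

Lemma clamp_id T t : 0 <= t <= T -> clamp T t = t.
Proof. intros. unfold clamp, Rmax, Rmin. destruct (Rle_dec t T), (Rle_dec 0 _); lra. Qed.

Lemma clamp_lip T t t' : 0 <= T -> Rabs (clamp T t - clamp T t') <= Rabs (t - t').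
Proof.
  intros. unfold clamp, Rmax, Rmin.
  destruct (Rle_dec t T), (Rle_dec t' T); repeat match goal with |- context [Rle_dec ?a ?b] => destruct (Rle_dec a b) end;
  unfold Rabs; repeat match goal with |- context [Rcase_abs ?a] => destruct (Rcase_abs a) end; lra.
Qed.

Lemma ivt_int (f : R -> R) T K x : 0 < T -> ex_RInt f 0 T -> (forall t, 0 < t < T -> 0 <= f t <= K) ->
  0 < x -> x <= RInt f 0 T ->
  exists T', 0 < T' <= T /\ RInt f 0 T' = x /\ (x < RInt f 0 T -> T' < T).
Proof.
  intros HT Hex Hb Hx HxT.
  destruct (Req_dec x (RInt f 0 T)) as [Heq|Hne].
  { exists T. split; [lra|]. split; auto. intros; lra. }
  assert (HK : 0 <= K) by (pose proof (Hb (T/2) ltac:(lra)); lra).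
  set (g := fun t => RInt f 0 (clamp T t) - x).
  assert (Hc : forall a, continuity_pt g a).
  { intros a. unfold continuity_pt, continue_in, limit1_in, limit_in. intros e He.
    exists (e / (K + 1)). split. { apply Rdiv_lt_0_compat; lra. }
    intros y [_ Hy]. simpl in *. unfold R_dist in *. unfold g.
    replace (RInt f 0 (clamp T y) - x - (RInt f 0 (clamp T a) - x))
      with (RInt f 0 (clamp T y) - RInt f 0 (clamp T a)) by ring.
    eapply Rle_lt_trans. apply (RInt_lip f T K); auto; try lra; apply clamp_in; lra.
    eapply Rle_lt_trans. apply Rmult_le_compat_l; auto. apply clamp_lip; lra.
    assert (Rabs (y - a) * (K + 1) < e).
    { apply Rmult_lt_compat_r with (r := K + 1) in Hy; [|lra].
      unfold Rdiv in Hy. rewrite Rmult_assoc, Rinv_l in Hy; lra. }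
    pose proof (Rabs_pos (y - a)). nra. }
  assert (g0 : g 0 < 0).
  { unfold g. rewrite clamp_id by lra. rewrite RInt_point. unfold zero; simpl. lra. }
  assert (gT : 0 < g T).
  { unfold g. rewrite clamp_id by lra. lra. }
  destruct (IVT g 0 T (fun a => Hc a) HT g0 gT) as [z [Hz Hgz]].
  exists z. unfold g in Hgz. rewrite clamp_id in Hgz by lra.
  assert (z <> 0). { intro; subst. unfold g in g0. rewrite clamp_id in g0 by lra. lra. }
  assert (z <> T). { intro; subst. lra. }
  repeat split; try lra.
Qed.

Definition inJ (t1 t2 dl t : R) : Prop := (t1 <= t < t1 + dl) \/ (t2 <= t < t2 + dl).

Lemma ex_sub (f : R -> R) a b u v : a <= u <= v -> v <= b -> ex_RInt f a b -> ex_RInt f u v.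
Proof.
  intros. apply (ex_RInt_Chasles_2 f a u v); [lra|].
  apply (ex_RInt_Chasles_1 f a v b); auto; lra.
Qed.

Lemma Rint_const_val (u v c : R) : RInt (fun _ => c) u v = (v - u) * c.
Proof. rewrite RInt_const. unfold scal; simpl; unfold mult; simpl. ring. Qed.

Lemma piece_int (f g : R -> R) (v : R) t1 t2 dl T x :
  0 < t1 -> 0 < dl -> t1 + dl < t2 -> t2 + dl < T -> is_RInt f 0 T x ->
  (forall t, ~ inJ t1 t2 dl t -> g t = f t) -> (forall t, inJ t1 t2 dl t -> g t = v) ->
  ex_RInt g 0 T /\ RInt g 0 T = x - RInt f t1 (t1 + dl) - RInt f t2 (t2 + dl) + 2 * dl * v.
Proof.
  intros H1 Hd H12 H2T Hf Hout Hin.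
  assert (Hex : ex_RInt f 0 T) by (exists x; auto).
  assert (E1 : ex_RInt f 0 t1) by (apply (ex_sub f 0 T); auto; lra).
  assert (E2 : ex_RInt f t1 (t1+dl)) by (apply (ex_sub f 0 T); auto; lra).
  assert (E3 : ex_RInt f (t1+dl) t2) by (apply (ex_sub f 0 T); auto; lra).
  assert (E4 : ex_RInt f t2 (t2+dl)) by (apply (ex_sub f 0 T); auto; lra).
  assert (E5 : ex_RInt f (t2+dl) T) by (apply (ex_sub f 0 T); auto; lra).
  assert (Hx : x = RInt f 0 t1 + RInt f t1 (t1+dl) + RInt f (t1+dl) t2 + RInt f t2 (t2+dl) + RInt f (t2+dl) T).
  { rewrite <- (is_RInt_unique f 0 T x Hf).
    assert (ex_RInt f 0 (t1+dl)) by (apply (ex_sub f 0 T); auto; lra).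
    assert (ex_RInt f 0 t2) by (apply (ex_sub f 0 T); auto; lra).
    assert (ex_RInt f 0 (t2+dl)) by (apply (ex_sub f 0 T); auto; lra).
    rewrite <- (RInt_Chasles f 0 (t2+dl) T) by auto.
    rewrite <- (RInt_Chasles f 0 t2 (t2+dl)) by auto.
    rewrite <- (RInt_Chasles f 0 (t1+dl) t2) by auto.
    rewrite <- (RInt_Chasles f 0 t1 (t1+dl)) by auto.
    unfold plus; simpl. ring. }
  assert (G1 : is_RInt g 0 t1 (RInt f 0 t1)).
  { apply is_RInt_ext with f. 2: apply (RInt_correct f); auto.
    intros t Ht. rewrite Rmin_left, Rmax_right in Ht by lra. rewrite Hout; auto.
    unfold inJ; lra. }
  assert (G2 : is_RInt g t1 (t1+dl) (scal (t1 + dl - t1) v)).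
  { apply is_RInt_ext with (fun _ => v). 2: apply (@is_RInt_const R_NormedModule).
    intros t Ht. rewrite Rmin_left, Rmax_right in Ht by lra. rewrite Hin; auto.
    unfold inJ; lra. }
  assert (G3 : is_RInt g (t1+dl) t2 (RInt f (t1+dl) t2)).
  { apply is_RInt_ext with f. 2: apply (RInt_correct f); auto.
    intros t Ht. rewrite Rmin_left, Rmax_right in Ht by lra. rewrite Hout; auto.
    unfold inJ; lra. }
  assert (G4 : is_RInt g t2 (t2+dl) (scal (t2 + dl - t2) v)).
  { apply is_RInt_ext with (fun _ => v). 2: apply (@is_RInt_const R_NormedModule).
    intros t Ht. rewrite Rmin_left, Rmax_right in Ht by lra. rewrite Hin; auto.
    unfold inJ; lra. }
  assert (G5 : is_RInt g (t2+dl) T (RInt f (t2+dl) T)).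
  { apply is_RInt_ext with f. 2: apply (RInt_correct f); auto.
    intros t Ht. rewrite Rmin_left, Rmax_right in Ht by lra. rewrite Hout; auto.
    unfold inJ; lra. }
  pose proof (is_RInt_Chasles g _ _ _ _ _ G1 G2) as G12.
  pose proof (is_RInt_Chasles g _ _ _ _ _ G12 G3) as G123.
  pose proof (is_RInt_Chasles g _ _ _ _ _ G123 G4) as G1234.
  pose proof (is_RInt_Chasles g _ _ _ _ _ G1234 G5) as G.
  split. { eexists; eauto. }
  rewrite (is_RInt_unique g 0 T _ G). unfold plus, scal; simpl; unfold mult; simpl.
  rewrite Hx. match goal with |- ?a = ?b => change (@eq R a b) end. ring.
Qed.

Lemma int_upper (f : R -> R) u dl c : 0 < dl -> ex_RInt f u (u + dl) ->
  (forall t, u <= t <= u + dl -> f t <= c) -> RInt f u (u + dl) <= dl * c.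
Proof.
  intros. replace (dl * c) with (RInt (fun _ => c) u (u + dl)).
  - apply RInt_le; auto; try lra. apply ex_RInt_const. intros; apply H1; lra.
  - rewrite Rint_const_val. match goal with |- ?a = ?b => change (@eq R a b) end. ring.
Qed.

Definition thp (th : nat -> R -> R) (T : nat -> R) t1 t2 dl (d : nat -> R) j t :=
  if Rlt_dec t1 (T j) then
    (if excluded_middle_informative (inJ t1 t2 dl t) then d j else th j t)
  else th j t.

Lemma thp_out th T t1 t2 dl d j t : ~ inJ t1 t2 dl t -> thp th T t1 t2 dl d j t = th j t.
Proof. intros. unfold thp. destruct (Rlt_dec _ _); auto.
  destruct (excluded_middle_informative _); tauto. Qed.

Lemma thp_in th T t1 t2 dl d j t : t1 < T j -> inJ t1 t2 dl t -> thp th T t1 t2 dl d j t = d j.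
Proof. intros. unfold thp. destruct (Rlt_dec _ _); [|tauto].
  destruct (excluded_middle_informative _); tauto. Qed.

Lemma thp_inact th T t1 t2 dl d j t : ~ t1 < T j -> thp th T t1 t2 dl d j t = th j t.
Proof. intros. unfold thp. destruct (Rlt_dec _ _); tauto. Qed.

Lemma rc_thp th T t1 t2 dl d j t : 0 < dl -> t1 + dl < t2 -> right_cont_at (th j) t ->
  right_cont_at (thp th T t1 t2 dl d j) t.
Proof.
  intros Hdl H12 Hrc.
  destruct (Rlt_dec t1 (T j)) as [Ha|Ha].
  2:{ apply rc_local with (th j); auto. exists 1; split; [lra|]. intros; apply thp_inact; auto. }
  destruct (Rlt_dec t t1).
  { apply rc_local with (th j); auto. exists (t1 - t); split; [lra|]. intros; apply thp_out.
    unfold inJ; lra. }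
  destruct (Rlt_dec t (t1 + dl)).
  { apply rc_local with (fun _ => d j); [apply rc_const|]. exists (t1 + dl - t); split; [lra|].
    intros; apply thp_in; auto. unfold inJ; lra. }
  destruct (Rlt_dec t t2).
  { apply rc_local with (th j); auto. exists (t2 - t); split; [lra|]. intros; apply thp_out.
    unfold inJ; lra. }
  destruct (Rlt_dec t (t2 + dl)).
  { apply rc_local with (fun _ => d j); [apply rc_const|]. exists (t2 + dl - t); split; [lra|].
    intros; apply thp_in; auto. unfold inJ; lra. }
  apply rc_local with (th j); auto. exists 1; split; [lra|]. intros; apply thp_out.
  unfold inJ; lra.
Qed.

Definition thpp (g : nat -> R -> R) (T' : nat -> R) j t :=
  if Rlt_dec t (T' j) then g j t else 0.

Lemma rc_thpp g T' j t : right_cont_at (g j) t -> right_cont_at (thpp g T' j) t.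
Proof.
  intros Hrc. destruct (Rlt_dec t (T' j)).
  - apply rc_local with (g j); auto. exists (T' j - t); split; [lra|].
    intros; unfold thpp; destruct (Rlt_dec _ _); [auto|lra].
  - apply rc_local with (fun _ => 0); [apply rc_const|]. exists 1; split; [lra|].
    intros; unfold thpp; destruct (Rlt_dec _ _); [lra|auto].
Qed.

Lemma zero_after M x B s th T : feasible M x B s th T ->
  forall j, (j < M)%nat -> forall t, T j <= t -> th j t = 0.
Proof.
  intros [Hb [Hrc [_ [HT [_ Hz]]]]] j Hj t Ht.
  destruct (Rle_lt_or_eq_dec _ _ Ht) as [Hlt|Heq]; [apply Hz; auto|].
  subst t. pose proof (HT j Hj).
  apply Rabs_eq_0. apply Rle_antisym; [|apply Rabs_pos].
  apply Rnot_lt_le. intro Hpos.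
  destruct (Hrc j Hj (T j) H _ Hpos) as [d [Hd Hu]].
  specialize (Hu (T j + d / 2) ltac:(lra)). rewrite (Hz j Hj) in Hu by lra.
  rewrite Rminus_0_l, Rabs_Ropp in Hu. lra.
Qed.

Lemma core M x w B s th T (hB : 0 < B) (hx_pos : forall i, (i < M)%nat -> 0 < x i) (hw_pos : forall i, (i < M)%nat -> 0 < w i)
  (hs : speedup_ok B s) (hopt : optimal M x w B s th T)
  t1 t2 (H1 : 0 < t1) (H12 : t1 < t2) (Hrem : remaining M T t1 = remaining M T t2)
  i (Hi : (i < M)%nat) (Hne : th i t1 <> th i t2) : False.
Proof.
  destruct hopt as [Hf Hopt]. pose proof Hf as [Hb [Hrc [Hsum [HT [Hint Hz]]]]].
  pose proof (zero_after M x B s th T Hf) as Hza.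
  assert (Hact : forall j, (j < M)%nat -> t1 < T j -> t2 < T j).
  { intros j Hj Hj1. destruct (Rlt_dec t2 (T j)) as [|Hn]; auto. exfalso.
    unfold remaining in Hrem.
    assert (Nat.lt (count_lt (fun i => t2 < T i) (fun i => Rlt_dec t2 (T i)) M)
            (count_lt (fun i => t1 < T i) (fun i => Rlt_dec t1 (T i)) M)).
    { apply count_lt_lt. intros; lra. exists j; repeat split; auto. }
    lia. }
  assert (Hia : t1 < T i).
  { destruct (Rlt_dec t1 (T i)) as [|Hn]; auto. exfalso; apply Hne.
    rewrite (Hza i Hi t1), (Hza i Hi t2); lra. }
  set (a := fun j => th j t1). set (b := fun j => th j t2).
  set (c := fun j => (a j + b j) / 2).
  assert (Ha : forall j, (j < M)%nat -> in_0B B (a j)) by (intros; apply Hb; auto; lra).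
  assert (Hbb : forall j, (j < M)%nat -> in_0B B (b j)) by (intros; apply Hb; auto; lra).
  assert (HsA : rsum a M <= B) by (apply Hsum; lra).
  assert (HsB : rsum b M <= B) by (apply Hsum; lra).
  assert (Hci : 0 < c i).
  { pose proof (Ha i Hi); pose proof (Hbb i Hi). unfold in_0B in *. unfold c.
    assert (a i <> b i) by exact Hne. destruct (Req_dec (a i) 0); [|unfold a in *; lra].
    rewrite H3 in *. assert (b i <> 0) by auto. lra. }
  assert (Hci_in : in_0B B (c i)).
  { pose proof (Ha i Hi); pose proof (Hbb i Hi). unfold in_0B, c in *. lra. }
  set (g := s (c i) - (s (a i) + s (b i)) / 2).
  assert (Hg : 0 < g).
  { unfold g, c. pose proof (s_mid_strict B s hs (a i) (b i) (Ha i Hi) (Hbb i Hi) Hne). lra. }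
  destruct (s_cont B s hs (c i) Hci_in (g / 2) ltac:(lra)) as [dd [Hdd Hsc]].
  set (rho := Rmin (dd / 2) (c i)).
  assert (Hrho : 0 < rho /\ rho <= c i /\ rho < dd).
  { unfold rho. pose proof (Rmin_l (dd/2) (c i)); pose proof (Rmin_r (dd/2) (c i)).
    pose proof (Rmin_pos (dd/2) (c i) ltac:(lra) Hci). lra. }
  set (Mr := INR M).
  assert (HMr : 1 <= Mr). { unfold Mr. replace 1 with (INR 1) by reflexivity. apply le_INR; lia. }
  assert (Hrm : 0 < rho / Mr <= rho).
  { split. apply Rdiv_lt_0_compat; lra.
    unfold Rdiv. rewrite <- (Rmult_1_r rho) at 2. apply Rmult_le_compat_l; [lra|].
    rewrite <- Rinv_1. apply Rinv_le_contravar; lra. }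
  set (d := fun j => if Nat.eq_dec j i then c j - rho else c j + rho / Mr).
  assert (Hcj : forall j, (j < M)%nat -> j <> i -> 0 <= c j /\ c j + c i <= B).
  { intros j Hj Hji. pose proof (Ha j Hj); pose proof (Hbb j Hj).
    pose proof (rsum_two a M j i (fun k Hk => proj1 (Ha k Hk)) Hj Hi Hji).
    pose proof (rsum_two b M j i (fun k Hk => proj1 (Hbb k Hk)) Hj Hi Hji).
    unfold in_0B, c in *. lra. }
  assert (Hd_in : forall j, (j < M)%nat -> in_0B B (d j)).
  { intros j Hj. unfold d. destruct (Nat.eq_dec j i).
    - subst. unfold in_0B in *. lra.
    - destruct (Hcj j Hj n). unfold in_0B. lra. }
  set (m := fun j => 2 * s (d j) - s (a j) - s (b j)).
  assert (Hm : forall j, (j < M)%nat -> 0 < m j).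
  { intros j Hj. unfold m. destruct (Nat.eq_dec j i) as [->|Hji].
    - assert (Hdi : d i = c i - rho) by (unfold d; destruct (Nat.eq_dec i i); tauto).
      assert (Rabs (s (d i) - s (c i)) < g / 2).
      { apply Hsc. apply Hd_in; auto. rewrite Hdi.
        replace (c i - rho - c i) with (- rho) by ring. rewrite Rabs_Ropp, Rabs_pos_eq; lra. }
      apply Rabs_def2 in H. unfold g in *. lra.
    - assert (Hdj : d j = c j + rho / Mr) by (unfold d; destruct (Nat.eq_dec j i); tauto).
      pose proof (s_mid B s hs (a j) (b j) (Ha j Hj) (Hbb j Hj)).
      destruct hs as [_ [Hmono _]].
      assert (s (c j) < s (d j)).
      { apply Hmono. unfold c in *. pose proof (Ha j Hj); pose proof (Hbb j Hj).
        unfold in_0B in *. lra. apply Hd_in; auto. rewrite Hdj; lra. }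
      unfold c in *. lra. }
  assert (Hsumd : rsum (fun j => if Rlt_dec t1 (T j) then d j else 0) M <= B).
  { apply Rle_trans with (rsum (fun j => c j + ((if Nat.eq_dec j i then - rho else 0) + rho / Mr)) M).
    - apply rsum_le. intros j Hj. unfold d.
      destruct (Rlt_dec t1 (T j)), (Nat.eq_dec j i); subst; try lra.
      destruct (Hcj j Hj n0); lra.
    - rewrite rsum_plus, rsum_plus, rsum_delta, rsum_const by auto.
      fold Mr. replace (Mr * (rho / Mr)) with rho by (field; lra).
      assert (rsum c M = (rsum a M + rsum b M) / 2).
      { unfold c. unfold Rdiv. rewrite <- rsum_plus.
        rewrite Rmult_comm, <- rsum_scal. apply rsum_ext; intros; lra. }
      fold Mr. lra. }
  set (P := fun j dl => t1 < T j -> t2 + dl < T j /\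
        (forall u, t1 <= u <= t1 + dl -> s (th j u) <= s (a j) + m j / 4) /\
        (forall u, t2 <= u <= t2 + dl -> s (th j u) <= s (b j) + m j / 4)).
  assert (Pmon : forall j dl dl', (j < M)%nat -> 0 < dl' <= dl -> P j dl -> P j dl').
  { unfold P. intros j dl dl' Hj Hd HP Hjt. destruct (HP Hjt) as [X [Y Z]].
    repeat split; [lra| intros; apply Y; lra | intros; apply Z; lra]. }
  destruct (fin_delta P M Pmon) as [d0 [Hd0 HP]].
  { intros j Hj. destruct (Rlt_dec t1 (T j)) as [Hjt|Hjt].
    2:{ exists 1; split; [lra|]. intro; tauto. }
    assert (Hmj := Hm j Hj).
    destruct (rc_comp_s B s (th j) t1 hs (Hrc j Hj t1 H1)
      (fun u Hu => Hb j Hj u ltac:(lra)) (m j / 4) ltac:(lra)) as [e1 [He1 HH1]].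
    destruct (rc_comp_s B s (th j) t2 hs (Hrc j Hj t2 ltac:(lra))
      (fun u Hu => Hb j Hj u ltac:(lra)) (m j / 4) ltac:(lra)) as [e2 [He2 HH2]].
    pose proof (Hact j Hj Hjt).
    exists (Rmin (Rmin (e1/2) (e2/2)) ((T j - t2)/2)).
    pose proof (Rmin_l (Rmin (e1/2) (e2/2)) ((T j - t2)/2)).
    pose proof (Rmin_r (Rmin (e1/2) (e2/2)) ((T j - t2)/2)).
    pose proof (Rmin_l (e1/2) (e2/2)). pose proof (Rmin_r (e1/2) (e2/2)).
    pose proof (Rmin_pos (e1/2) (e2/2) ltac:(lra) ltac:(lra)).
    pose proof (Rmin_pos (Rmin (e1/2) (e2/2)) ((T j - t2)/2) ltac:(lra) ltac:(lra)).
    split; auto. intros _. split; [lra|]. split.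
    - intros u Hu. specialize (HH1 u ltac:(lra)). apply Rabs_def2 in HH1. unfold a; lra.
    - intros u Hu. specialize (HH2 u ltac:(lra)). apply Rabs_def2 in HH2. unfold b; lra. }
  set (dl := Rmin d0 ((t2 - t1) / 2)).
  assert (Hdl : 0 < dl /\ dl <= d0 /\ t1 + dl < t2).
  { unfold dl. pose proof (Rmin_l d0 ((t2 - t1) / 2)); pose proof (Rmin_r d0 ((t2 - t1) / 2)).
    pose proof (Rmin_pos d0 ((t2 - t1) / 2) Hd0 ltac:(lra)). lra. }
  assert (HPdl : forall j, (j < M)%nat -> P j dl) by (intros; apply Pmon with d0; auto; lra).
  set (th' := thp th T t1 t2 dl d).
  assert (Hth'_in : forall j, (j < M)%nat -> forall t, 0 < t -> in_0B B (th' j t)).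
  { intros j Hj t Ht. unfold th', thp. destruct (Rlt_dec _ _); [destruct (excluded_middle_informative _)|];
    auto; apply Hb; auto. }
  assert (Hint' : forall j, (j < M)%nat ->
    ex_RInt (fun t => s (th' j t)) 0 (T j) /\ x j <= RInt (fun t => s (th' j t)) 0 (T j) /\
    (t1 < T j -> x j < RInt (fun t => s (th' j t)) 0 (T j))).
  { intros j Hj. destruct (Rlt_dec t1 (T j)) as [Hjt|Hjt].
    - destruct (HPdl j Hj Hjt) as [HT2 [U1 U2]].
      assert (Ho : forall t, ~ inJ t1 t2 dl t -> s (th' j t) = s (th j t)).
      { intros t Ht. unfold th'. rewrite thp_out; auto. }
      assert (Hi' : forall t, inJ t1 t2 dl t -> s (th' j t) = s (d j)).
      { intros t Ht. unfold th'. rewrite thp_in; auto. }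
      destruct (piece_int (fun t => s (th j t)) (fun t => s (th' j t)) (s (d j)) t1 t2 dl (T j) (x j)
        H1 (proj1 Hdl) (proj2 (proj2 Hdl)) HT2 (Hint j Hj) Ho Hi') as [Ex Eq].
      { assert (Hexf : ex_RInt (fun t => s (th j t)) 0 (T j)) by (exists (x j); auto).
        assert (I1 : RInt (fun t => s (th j t)) t1 (t1 + dl) <= dl * (s (a j) + m j / 4)).
        { apply int_upper; [lra | apply (ex_sub _ 0 (T j)); auto; lra | exact U1]. }
        assert (I2 : RInt (fun t => s (th j t)) t2 (t2 + dl) <= dl * (s (b j) + m j / 4)).
        { apply int_upper; [lra | apply (ex_sub _ 0 (T j)); auto; lra | exact U2]. }
        pose proof (Hm j Hj). unfold m in *.
        assert (0 < dl * (2 * s (d j) - s (a j) - s (b j))) by (apply Rmult_lt_0_compat; lra).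
        split; auto. rewrite Eq. split; intros; nra. }
    - assert (is_RInt (fun t => s (th' j t)) 0 (T j) (x j)).
      { apply is_RInt_ext with (fun t => s (th j t)); auto.
        intros; unfold th'; rewrite thp_inact; auto. }
      split; [exists (x j); auto|]. rewrite (is_RInt_unique _ _ _ _ H). split; [lra| tauto]. }
  assert (HT' : forall j, exists Tj, (j < M)%nat -> 0 < Tj <= T j /\
     RInt (fun t => s (th' j t)) 0 Tj = x j /\ (t1 < T j -> Tj < T j)).
  { intros j. destruct (Compare_dec.lt_dec j M) as [Hj|Hj]; [|exists 0; intros; lia].
    destruct (Hint' j Hj) as [Ex [Le Lt]].
    assert (Hbd : forall t, 0 < t < T j -> 0 <= s (th' j t) <= s B).
    { intros t Ht. apply (s_range B s hB hs). apply Hth'_in; auto; lra. }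
    destruct (ivt_int (fun t => s (th' j t)) (T j) (s B) (x j) (HT j Hj) Ex Hbd (hx_pos j Hj) Le)
      as [Tj [A1 [A2 A3]]].
    exists Tj; intros _. split; [lra|]. split; [exact A2|]. intros Hq; apply A3, Lt, Hq. }
  destruct (functional_choice _ HT') as [T' HT'f].
  set (th'' := thpp th' T').
  assert (Hfeas : feasible M x B s th'' T').
  { split; [|split; [|split; [|split; [|split]]]].
    - intros j Hj t Ht. unfold th'', thpp. destruct (Rlt_dec _ _).
      apply Hth'_in; auto. unfold in_0B; lra.
    - intros j Hj t Ht. apply rc_thpp. unfold th'. apply rc_thp; try lra. apply Hrc; auto.
    - intros t Ht. apply Rle_trans with (rsum (fun j => th' j t) M).
      { apply rsum_le. intros j Hj. unfold th'', thpp. destruct (Rlt_dec _ _); [lra|].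
        apply Hth'_in; auto. }
      destruct (excluded_middle_informative (inJ t1 t2 dl t)) as [HJ|HJ].
      + apply Rle_trans with (2 := Hsumd). right. apply rsum_ext. intros j Hj.
        destruct (Rlt_dec t1 (T j)).
        * unfold th'; apply thp_in; auto.
        * unfold th'. rewrite thp_inact; auto. apply Hza; auto. unfold inJ in HJ; lra.
      + apply Rle_trans with (2 := Hsum t Ht). right. apply rsum_ext. intros j Hj.
        unfold th'; apply thp_out; auto.
    - intros j Hj. apply (HT'f j Hj).
    - intros j Hj. destruct (HT'f j Hj) as [[A0 A1] [A2 A3]]. destruct (Hint' j Hj) as [Ex _].
      rewrite <- A2. apply is_RInt_ext with (fun t => s (th' j t)).
      + intros t Ht. rewrite Rmin_left, Rmax_right in Ht by lra. unfold th'', thpp.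
        destruct (Rlt_dec _ _); [auto|lra].
      + apply (RInt_correct (fun t => s (th' j t))). apply (ex_sub _ 0 (T j)); auto; lra.
    - intros j Hj t Ht. unfold th'', thpp. destruct (Rlt_dec _ _); [lra|auto]. }
  specialize (Hopt th'' T' Hfeas). unfold cost in Hopt.
  assert (rsum (fun j => w j * T' j) M < rsum (fun j => w j * T j) M).
  { apply rsum_lt with i; auto.
    - intros j Hj. destruct (HT'f j Hj) as [[A0 A1] _]. pose proof (hw_pos j Hj). nra.
    - destruct (HT'f i Hi) as [_ [_ A3]]. pose proof (A3 Hia). pose proof (hw_pos i Hi). nra. }
  lra.
Qed.

Theorem proposition7 (M : nat) (x w : nat -> R) (B : R) (s : R -> R)
  (hB : 0 < B)
  (hx_pos : forall i, (i < M)%nat -> 0 < x i)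
  (hx_dec : forall i j, (i <= j < M)%nat -> x j <= x i)
  (hw_pos : forall i, (i < M)%nat -> 0 < w i)
  (hw_inc : forall i j, (i <= j < M)%nat -> w i <= w j)
  (hs : speedup_ok B s)
  (theta : nat -> R -> R) (T : nat -> R)
  (hopt : optimal M x w B s theta T) :
  forall t1 t2, 0 < t1 -> 0 < t2 ->
    remaining M T t1 = remaining M T t2 ->
    forall i, (i < M)%nat -> theta i t1 = theta i t2.
Proof.
  intros t1 t2 H1 H2 Hrem i Hi.
  destruct (Req_dec (theta i t1) (theta i t2)) as [E|Hne]; auto. exfalso.
  destruct (Rtotal_order t1 t2) as [Hlt|[Heq|Hgt]].
  - exact (core M x w B s theta T hB hx_pos hw_pos hs hopt t1 t2 H1 Hlt Hrem i Hi Hne).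
  - subst; apply Hne; reflexivity.
  - exact (core M x w B s theta T hB hx_pos hw_pos hs hopt t2 t1 H2 Hgt (eq_sym Hrem) i Hi
      (fun e => Hne (eq_sym e))).
Qed.
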